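(* Let $\mathcal X$ be a countable set, $\mathcal Y$ a finite set, $\rho$ a probability distribution on $\mathcal X$, and for each $x$ let $\mu(\cdot|x)$ and $\pi_{\mathrm{ref}}(\cdot|x)$ be probability distributions on $\mathcal Y$ with $\mu(y|x)>0$ and $\pi_{\mathrm{ref}}(y|x)>0$ for all $y$. Let $r:\mathcal X\times\mathcal Y\to\mathbb R$, $\tau>0$, and define for policies $\pi$ (with $\pi(y|x)>0$) and functions $V:\mathcal X\to\mathbb R$ $$\mathcal L(\pi,V)=\tfrac12\,\mathbb E_{x\sim\rho,\,y\sim\mu(\cdot|x)}\Big[\Big(r(x,y)-V(x)-\tau\log\tfrac{\pi(y|x)}{\pi_{\mathrm{ref}}(y|x)}\Big)^2\Big],$$ and $V^\pi(x)=\mathbb E_{y\sim\mu(\cdot|x)}\big[r(x,y)-\tau\log\frac{\pi(y|x)}{\pi_{\mathrm{ref}}(y|x)}\big]$ (the minimiser of $V\mapsto\mathcal L(\pi,V)$). Let $V^*(x)=\tau\log\mathbb E_{y\sim\pi_{\mathrm{ref}}(\cdot|x)}[e^{r(x,y)/\tau}]$ and $\pi^*(y|x)=\pi_{\mathrm{ref}}(y|x)e^{(r(x,y)-V^*(x))/\tau}$. Fix $V:\mathcal X\to\mathbb R$ and let $\pi_V$ be a minimiser of $\pi\mapsto\mathcal L(\pi,V)$ over policies with $\pi_V(y|x)>0$ for all $x,y$. Then for every $x\in\operatorname{supp}\rho$: (i) $\pi_V(y|x)\propto\pi_{\mathrm{ref}}(y|x)\exp\Big(\tfrac1\tau\Big[r(x,y)-\tfrac{\pi_V(y|x)}{\mu(y|x)}\big(V^{\pi_V}(x)-V(x)\big)\Big]\Big)$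 as a function of $y$; (ii) for all $y\in\mathcal Y$, $$\Big|\log\frac{\pi_V(y|x)}{\pi^*(y|x)}\Big|\le\frac2\tau\max_{y'\in\mathcal Y}\Big|\big(V^{\pi_V}(x)-V(x)\big)\Big(1-\frac{\pi_V(y'|x)}{\mu(y'|x)}\Big)\Big|.$$
   Context: $\pi^*$ is the optimal KL-regularised policy (maximiser of $\mathbb E_{x\sim\rho,y\sim\pi}[r(x,y)]-\tau\,\mathbb E_{x\sim\rho}D_{\mathrm{KL}}(\pi(\cdot|x)\|\pi_{\mathrm{ref}}(\cdot|x))$); $\mu$ is the data-generating behaviour distribution. *)

(* Defs.v *)
From HB Require Import structures.
From mathcomp Require Import all_boot all_order all_algebra.
From mathcomp Require Import all_classical all_reals all_analysis.
Set Implicit Arguments. Unset Strict Implicit. Unset Printing Implicit Defensive.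
Import Order.TTheory GRing.Theory Num.Theory.
Local Open Scope ring_scope.
Local Open Scope classical_set_scope.

Section Defs.
Variables (R : realType) (X : countType) (Y : finType).

Definition pos_policy (p : X -> Y -> R) : Prop :=
  (forall x y, 0 < p x y) /\ (forall x, \sum_(y : Y) p x y = 1).

Definition prob_on (rho : X -> R) : Prop :=
  (forall x, 0 <= rho x) /\ esum [set: X] (fun x => (rho x)%:E) = 1%E.

Definition lossL (rho : X -> R) (mu piref : X -> Y -> R) (r : X -> Y -> R)
    (tau : R) (pi : X -> Y -> R) (V : X -> R) : \bar R :=
  ((1/2)%:E * esum [set: X] (fun x => (rho x * \sum_(y : Y) mu x y *
      (r x y - V x - tau * ln (pi x y / piref x y)) ^+ 2)%:E))%E.

Definition Vpi (mu piref : X -> Y -> R) (r : X -> Y -> R) (tau : R)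
    (pi : X -> Y -> R) (x : X) : R :=
  \sum_(y : Y) mu x y * (r x y - tau * ln (pi x y / piref x y)).

Definition Vstar (piref : X -> Y -> R) (r : X -> Y -> R) (tau : R) (x : X) : R :=
  tau * ln (\sum_(y : Y) piref x y * expR (r x y / tau)).

Definition pistar (piref : X -> Y -> R) (r : X -> Y -> R) (tau : R)
    (x : X) (y : Y) : R :=
  piref x y * expR ((r x y - Vstar piref r tau x) / tau).

End Defs.

(* Main.v *)
Require Import Defs.
From HB Require Import structures.
From mathcomp Require Import all_boot all_order all_algebra.
From mathcomp Require Import all_classical all_reals all_analysis.
From mathcomp Require Import ring lra.
Import Order.TTheory GRing.Theory Num.Theory.
Local Open Scope ring_scope.


Definition Tf {R : realType} (m A tau ref : R) (s : R) : R := m * (A - tau * ln (s / ref)) ^+ 2.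

Lemma Tf_derive {R : realType} (m A tau ref s : R) : 0 < ref -> 0 < s ->
  is_derive s 1 (Tf m A tau ref) (- (2 * m * tau) * (A - tau * ln (s / ref)) / s).
Proof.
move=> r0 s0.
have hs : 0 < ref^-1 * s by rewrite mulr_gt0 // invr_gt0.
have H1 := is_derive1_comp (is_derive1_ln hs) (is_deriveZ ref^-1 (@is_derive_id _ _ s 1)).
have H2 := is_deriveZ m (is_deriveX 2 (is_deriveB (is_derive_cst A s 1) (is_deriveZ tau H1))).
move: H2; set f := (X in is_derive _ _ X _) => H2.
have -> : Tf m A tau ref = f.
  by apply/funext => z; rewrite /Tf /f /= [z / _]mulrC.
apply: (is_derive_eq H2) => /=.
rewrite [s / _]mulrC /=. idtac.
have : ref != 0 by rewrite gt_eqF.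
move=> rn0. rewrite -[LHS]/(m * ((2 * (A - tau * ln (ref^-1 * s)) ^+ 1) * (0 - tau * ((ref^-1 * s)^-1 * (ref^-1 * 1))))). rewrite expr1. field. by rewrite rn0 gt_eqF.
Qed.

Lemma stationary (R : realType) (ma mb Aa Ab tau ra rb pa pb : R) : 0 < ra -> 0 < rb ->
  0 < pa -> 0 < pb -> tau != 0 ->
  (forall t, -pa < t -> t < pb ->
     Tf ma Aa tau ra pa + Tf mb Ab tau rb pb <=
     Tf ma Aa tau ra (pa + t) + Tf mb Ab tau rb (pb - t)) ->
  ma * (Aa - tau * ln (pa / ra)) / pa = mb * (Ab - tau * ln (pb / rb)) / pb.
Proof.
move=> ra0 rb0 pa0 pb0 tau0 Hmin.
pose h := fun t => Tf ma Aa tau ra (pa + t) + Tf mb Ab tau rb (pb - t).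
have hD : forall t, -pa < t -> t < pb -> is_derive t 1 h
   (- (2 * ma * tau) * (Aa - tau * ln ((pa + t) / ra)) / (pa + t) * 1
    + - (2 * mb * tau) * (Ab - tau * ln ((pb - t) / rb)) / (pb - t) * (0 - 1)).
  move=> t t1 t2.
  have g1 := is_deriveD (is_derive_cst pa t 1) (@is_derive_id _ _ t 1).
  rewrite add0r in g1.
  have g2 := is_deriveB (is_derive_cst pb t 1) (@is_derive_id _ _ t 1).
  have f1 := @Tf_derive _ ma Aa tau ra (pa + t) ra0 ltac:(lra).
  have f2 := @Tf_derive _ mb Ab tau rb (pb - t) rb0 ltac:(lra).
  have := is_deriveD (@is_derive1_comp _ _ (cst pa + id) _ _ _ f1 g1) (@is_derive1_comp _ _ (cst pb - id) _ _ _ f2 g2).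
  set F := (X in is_derive _ _ X _) => HF.
  have E : F = h by apply/funext => z.
  exact HF.
have h0 : is_derive (0:R) (1:R) h (0:R).
  apply: (@derive1_at_min _ h (-pa) pb 0).
  - lra.
  - move=> t; rewrite in_itv /= => /andP[t1 t2]. by case: (hD t t1 t2).
  - by rewrite in_itv /=; apply/andP; split; lra.
  - move=> t; rewrite in_itv /= => /andP[t1 t2].
    rewrite /h /= !addr0 subr0. exact: Hmin.
have h0' := hD 0 ltac:(lra) ltac:(lra).
have E1 := @derive_val _ _ _ _ _ _ _ h0.
rewrite (@derive_val _ _ _ _ _ _ _ h0') addr0 subr0 in E1.
move: E1.
move=> E.
have pa0' : pa != 0 by rewrite gt_eqF.
have pb0' : pb != 0 by rewrite gt_eqF.
have : - (2 * tau) * (ma * (Aa - tau * ln (pa / ra)) / pa - mb * (Ab - tau * ln (pb / rb)) / pb) = 0.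
  rewrite -[RHS]E; field; by rewrite pa0' pb0'.
move/eqP; rewrite mulf_eq0 oppr_eq0 mulf_eq0 (negbTE tau0) orbF subr_eq0 => /orP[|/eqP//].
by rewrite pnatr_eq0.
Qed.

Lemma sum2 (R : realType) (Y : finType) (F G : Y -> R) (a b : Y) : a != b ->
  (forall y, y != a -> y != b -> F y = G y) ->
  \sum_(y : Y) F y - \sum_(y : Y) G y = F a - G a + (F b - G b).
Proof.
move=> ab E; rewrite -sumrB (bigD1 a) // (bigD1 b) /=; last by rewrite eq_sym.
rewrite big1 ?addr0 // => y /andP[ya yb]; by rewrite E // subrr.
Qed.

Local Open Scope classical_set_scope.
Lemma local_opt (R : realType) (X : countType) (Y : finType)
  (rho : X -> R) (mu piref : X -> Y -> R) (r : X -> Y -> R) (tau : R)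
  (V : X -> R) (piV : X -> Y -> R) (x : X) (q : Y -> R) :
  prob_on rho -> pos_policy mu -> pos_policy piV ->
  (forall pi : X -> Y -> R, pos_policy pi ->
     (lossL rho mu piref r tau piV V <= lossL rho mu piref r tau pi V)%E) ->
  (lossL rho mu piref r tau piV V < +oo)%E ->
  0 < rho x -> (forall y, 0 < q y) -> \sum_(y : Y) q y = 1 ->
  \sum_(y : Y) mu x y * (r x y - V x - tau * ln (piV x y / piref x y)) ^+ 2 <=
  \sum_(y : Y) mu x y * (r x y - V x - tau * ln (q y / piref x y)) ^+ 2.
Proof.
move=> [rho0 _] [mu0 _] [pv0 pv1] Hmin Hfin rx0 q0 q1.
pose pi' := fun x' y => if x' == x then q y else piV x' y.
have pp : pos_policy pi'.
  split=> [x' y|x']; rewrite /pi'; case: (x' == x) => //.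
pose f (pi : X -> Y -> R) := fun x' => (rho x' * \sum_(y : Y) mu x' y *
      (r x' y - V x' - tau * ln (pi x' y / piref x' y)) ^+ 2)%:E.
have f0 : forall pi x', (0 <= f pi x')%E.
  move=> pi x'; rewrite lee_fin mulr_ge0 // sumr_ge0 // => y _.
  by rewrite mulr_ge0 ?sqr_ge0 // ltW.
have Ls : forall pi, lossL rho mu piref r tau pi V =
    ((1/2)%:E * (f pi x + esum (~` [set x]) (f pi)))%E.
  move=> pi; rewrite /lossL (esumID [set x]); last by move=> i _; exact: f0.
  rewrite setTI setTI esum_set1 //; exact: f0.
have Eo : esum (~` [set x]) (f pi') = esum (~` [set x]) (f piV).
  apply: eq_esum => i /= ix; rewrite /f /pi'.
  by have -> : (i == x) = false by apply/negbTE/eqP.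
have := Hmin pi' pp; rewrite !Ls Eo.
move: Hfin; rewrite Ls.
have : (0 <= esum (~` [set x]) (f piV))%E by apply: esum_ge0 => i _; exact: f0.
case: (esum (~` [set x]) (f piV)) => [s| |] //= s0.
  rewrite /f /pi' eqxx -!EFinD -!EFinM lee_fin => _ H.
  have : rho x * \sum_(y : Y) mu x y * (r x y - V x - tau * ln (piV x y / piref x y)) ^+ 2 <=
         rho x * \sum_(y : Y) mu x y * (r x y - V x - tau * ln (q y / piref x y)) ^+ 2 by lra.
  by rewrite ler_pM2l.
by rewrite /f addey // mulry gtr0_sg // mul1e.
Qed.

Local Close Scope classical_set_scope.

Theorem proposition1 (R : realType) (X : countType) (Y : finType)
  (rho : X -> R) (mu piref : X -> Y -> R) (r : X -> Y -> R) (tau : R)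
  (V : X -> R) (piV : X -> Y -> R) :
  prob_on rho ->
  pos_policy mu -> pos_policy piref ->
  0 < tau ->
  pos_policy piV ->
  (forall pi : X -> Y -> R, pos_policy pi ->
     (lossL rho mu piref r tau piV V <= lossL rho mu piref r tau pi V)%E) ->
  (lossL rho mu piref r tau piV V < +oo)%E ->
  forall x : X, 0 < rho x ->
    (exists c : R, forall y : Y,
       piV x y = c * (piref x y * expR ((r x y
         - piV x y / mu x y * (Vpi mu piref r tau piV x - V x)) / tau)))
    /\
    (forall y : Y,
       `| ln (piV x y / pistar piref r tau x y) |
         <= 2 / tau * \big[Num.max/0]_(y' : Y)
              `| (Vpi mu piref r tau piV x - V x) * (1 - piV x y' / mu x y') |).
Proof.
move=> Hrho Hmu Href tau0 HpV Hmin Hfin x rx0.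
have [mu0 mu1] := Hmu; have [rf0 rf1] := Href; have [pv0 pv1] := HpV.
have tn0 : tau != 0 by rewrite gt_eqF.
pose e y := r x y - V x - tau * ln (piV x y / piref x y).
have stat : forall a b, mu x a * e a / piV x a = mu x b * e b / piV x b.
  move=> a b; case: (eqVneq a b) => [-> //|ab].
  apply: (@stationary R (mu x a) (mu x b) (r x a - V x) (r x b - V x) tau
     (piref x a) (piref x b) (piV x a) (piV x b)) => // t t1 t2.
  pose q y := piV x y + (if y == a then t else 0) - (if y == b then t else 0).
  have qa : q a = piV x a + t by rewrite /q eqxx (negbTE ab) subr0.
  have qb : q b = piV x b - t by rewrite /q eq_sym (negbTE ab) eqxx addr0.
  have qo : forall y, y != a -> y != b -> q y = piV x y.
    by move=> y ya yb; rewrite /q (negbTE ya) (negbTE yb) addr0 subr0.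
  have q0 : forall y, 0 < q y.
    move=> y; case: (eqVneq y a) => [->|ya]; first by rewrite qa; lra.
    case: (eqVneq y b) => [->|yb]; first by rewrite qb; lra.
    by rewrite qo.
  have q1 : \sum_(y : Y) q y = 1.
    rewrite /q sumrB big_split /= pv1 -!big_mkcond /= !big_pred1_eq; ring.
  have H := @local_opt R X Y rho mu piref r tau V piV x q Hrho Hmu HpV Hmin Hfin rx0 q0 q1.
  have := @sum2 R Y (fun y => Tf (mu x y) (r x y - V x) tau (piref x y) (q y))
    (fun y => Tf (mu x y) (r x y - V x) tau (piref x y) (piV x y)) a b ab.
  move=> /(_ (fun y ya yb => congr1 _ (qo y ya yb))) /=.
  rewrite qa qb => E.
  have H' : \sum_(y : Y) Tf (mu x y) (r x y - V x) tau (piref x y) (piV x y) <=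
     \sum_(y : Y) Tf (mu x y) (r x y - V x) tau (piref x y) (q y) by exact: H.
  lra.
have Ke : Vpi mu piref r tau piV x - V x = \sum_(y : Y) mu x y * e y.
  have -> : \sum_(y : Y) mu x y * e y =
    \sum_(y : Y) mu x y * (r x y - tau * ln (piV x y / piref x y)) -
    \sum_(y : Y) mu x y * V x.
    by rewrite -sumrB; apply: eq_bigr => y _; rewrite /e; ring.
  by rewrite -big_distrl /= mu1 mul1r.
have Kp : forall y, mu x y * e y = piV x y * (Vpi mu piref r tau piV x - V x).
  move=> y; rewrite Ke.
  have -> : \sum_(y' : Y) mu x y' * e y' =
      \sum_(y' : Y) (mu x y * e y / piV x y) * piV x y'.
    apply: eq_bigr => y' _; rewrite (stat y y'); field.
    by rewrite gt_eqF.
  rewrite -big_distrr /= pv1 mulr1; field; by rewrite gt_eqF.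
set k := Vpi mu piref r tau piV x - V x.
have Ee : forall y, piV x y / mu x y * k = e y.
  move=> y; have m0 := mu0 x y; have -> : e y = (mu x y * e y) / mu x y by field; rewrite gt_eqF.
  rewrite Kp -/k; field; by rewrite gt_eqF.
have pr0 : forall y, 0 < piV x y / piref x y by move=> y; rewrite divr_gt0.
split.
  exists (expR (- V x / tau)) => y; rewrite Ee /e.
  have -> : (r x y - (r x y - V x - tau * ln (piV x y / piref x y))) / tau =
     V x / tau + ln (piV x y / piref x y) by field.
  rewrite expRD lnK ?posrE // mulNr expRN.
  have := expR_gt0 (V x / tau); have := rf0 x y => h1 h2.
  field; by rewrite !gt_eqF.
move=> y.
pose S := \sum_(i : Y) piref x i * expR (r x i / tau).
have Spos : 0 < S.
  rewrite /S (bigD1 y) //=.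
  have h1 : 0 < piref x y * expR (r x y / tau) by rewrite mulr_gt0 ?expR_gt0.
  have h2 : 0 <= \sum_(i | i != y) piref x i * expR (r x i / tau).
    by apply: sumr_ge0 => i _; rewrite mulr_ge0 // ?ltW ?expR_gt0.
  lra.
pose D := Vstar piref r tau x - V x.
have KD : expR (D / tau) = \sum_(i : Y) piV x i * expR (e i / tau).
  have -> : D / tau = ln S + - V x / tau by rewrite /D /Vstar -/S; field.
  rewrite expRD lnK ?posrE // /S big_distrl /=; apply: eq_bigr => i _.
  have E1 : e i / tau = r x i / tau + - V x / tau + - ln (piV x i / piref x i).
    by rewrite /e; field.
  rewrite E1 !expRD expRN lnK ?posrE //.
  have := rf0 x i; have := pv0 x i => h1 h2.
  field; by rewrite !gt_eqF.
have Bnd : forall y', `| k - e y' | <= \big[Num.max/0]_(y' : Y)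
              `| k * (1 - piV x y' / mu x y') |.
  move=> y'; have -> : k - e y' = k * (1 - piV x y' / mu x y').
    by rewrite -Ee; ring.
  exact: (le_bigmax 0 (fun y' => `| k * (1 - piV x y' / mu x y') |) y').
case: (@arg_maxP _ R Y y xpredT e erefl) => yM _ HM.
case: (@arg_minP _ R Y y xpredT e erefl) => ym _ Hm.
have hM : D <= e yM.
  have : expR (D / tau) <= expR (e yM / tau).
    rewrite KD.
    have -> : expR (e yM / tau) = \sum_(i : Y) piV x i * expR (e yM / tau).
      by rewrite -big_distrl /= pv1 mul1r.
    apply: ler_sum => i _; apply: ler_wpM2l; first exact: ltW.
    by rewrite ler_expR ler_pM2r ?invr_gt0 //; exact: HM.
  by rewrite ler_expR ler_pM2r ?invr_gt0.
have hm : e ym <= D.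
  have : expR (e ym / tau) <= expR (D / tau).
    rewrite KD.
    have -> : expR (e ym / tau) = \sum_(i : Y) piV x i * expR (e ym / tau).
      by rewrite -big_distrl /= pv1 mul1r.
    apply: ler_sum => i _; apply: ler_wpM2l; first exact: ltW.
    by rewrite ler_expR ler_pM2r ?invr_gt0 //; exact: Hm.
  by rewrite ler_expR ler_pM2r ?invr_gt0.
have Lq : ln (piV x y / pistar piref r tau x y) = (D - e y) / tau.
  rewrite /pistar.
  have -> : piV x y / (piref x y * expR ((r x y - Vstar piref r tau x) / tau)) =
     (piV x y / piref x y) / expR ((r x y - Vstar piref r tau x) / tau).
    by rewrite invfM mulrA.
  rewrite ln_div ?posrE ?expR_gt0 // expRK /D /e; field; exact: tn0.
rewrite Lq normrM (@gtr0_norm _ tau^-1); last by rewrite invr_gt0.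
rewrite [2 / tau * _]mulrAC ler_pM2r ?invr_gt0 //.
have b1 := Bnd yM; have b2 := Bnd y; have b3 := Bnd ym.
rewrite ler_norml in b1; rewrite ler_norml in b2; rewrite ler_norml in b3.
move: b1 b2 b3 => /andP[b1 b1'] /andP[b2 b2'] /andP[b3 b3'].
set B := \big[Num.max/0]_(y' : Y) _ in b1 b1' b2 b2' b3 b3' *.
rewrite ler_norml; apply/andP; split; lra.
Qed.
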